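(* Assume that there exists a disjoint stationary sequence on $\omega_2$. Then the $\omega_1$-approachability property fails.
   Context: For an uncountable ordinal $\alpha < \omega_2$, $P_{\omega_1}(\alpha)$ is the set of countable subsets of $\alpha$; a set $c \subseteq P_{\omega_1}(\alpha)$ is club if it is cofinal (under $\subseteq$) and closed under unions of countable increasing sequences, and $s \subseteq P_{\omega_1}(\alpha)$ is stationary if it meets every club in $P_{\omega_1}(\alpha)$. A disjoint stationary sequence on $\omega_2$ is a sequence $\langle s_\alpha : \alpha \in S \rangle$, where $S$ is a stationary subset of $\omega_2 \cap \mathrm{cof}(\omega_1)$, such that each $s_\alpha$ is a stationary subset of $P_{\omega_1}(\alpha)$ and $s_\alpha \cap s_\beta = \emptyset$ for all $\alpha < \beta$ in $S$. The $\omega_1$-approachability property is the statement that there exist a sequence $\langle a_i : i < \omega_2 \rangle$ of countable subsets of $\omega_2$ and a club $C \subseteq \omega_2$ such that for every limit ordinal $\alpha \in C$ there is a cofinal set $c \subseteq \alpha$ of order type $\mathrm{cf}(\alpha)$ such that for all $\beta < \alpha$, $c \cap \beta \in \{ a_i : i < \alpha \}$. *)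

(* Defs.v *)
From mathcomp Require Import all_boot.
From mathcomp Require Import boolp classical_sets cardinality.
Set Implicit Arguments. Unset Strict Implicit. Unset Printing Implicit Defensive.
Local Open Scope classical_set_scope.
Local Open Scope card_scope.

Definition strict_wellorder (T : Type) (lt : T -> T -> Prop) : Prop :=
  (forall x, ~ lt x x) /\
  (forall x y z, lt x y -> lt y z -> lt x z) /\
  (forall x y, lt x y \/ x = y \/ lt y x) /\
  well_founded lt.

Definition seg (T : Type) (lt : T -> T -> Prop) (x : T) : set T := [set y | lt y x].

Definition is_omega1 (W1 : Type) (lt1 : W1 -> W1 -> Prop) : Prop :=
  strict_wellorder lt1 /\ ~ countable [set: W1] /\
  (forall x, countable (seg lt1 x)).

Definition is_omega2 (W1 : Type) (W2 : Type) (lt2 : W2 -> W2 -> Prop) : Prop :=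
  strict_wellorder lt2 /\ ~ ([set: W2] #<= [set: W1]) /\
  (forall x, seg lt2 x #<= [set: W1]).

Section Defs.
Variables (W1 : Type) (lt1 : W1 -> W1 -> Prop) (W2 : Type) (lt2 : W2 -> W2 -> Prop).

Definition cofinal_in (c : set W2) (alpha : W2) : Prop :=
  c `<=` seg lt2 alpha /\
  forall b, lt2 b alpha -> exists2 g, c g & (b = g \/ lt2 b g).

Definition cof_omega1 (alpha : W2) : Prop :=
  exists f : W1 -> W2,
    (forall x y, lt1 x y -> lt2 (f x) (f y)) /\ cofinal_in (range f) alpha.

Definition otp_le (c d : set W2) : Prop :=
  exists f : W2 -> W2,
    (forall x, c x -> d (f x)) /\
    (forall x y, c x -> c y -> lt2 x y -> lt2 (f x) (f y)).

(* c has order type cf(alpha): c is cofinal in alpha and its order type is the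
   least order type of a cofinal subset of alpha. *)
Definition otp_is_cf (c : set W2) (alpha : W2) : Prop :=
  cofinal_in c alpha /\ forall d, cofinal_in d alpha -> otp_le c d.

Definition is_limit (alpha : W2) : Prop :=
  (exists b, lt2 b alpha) /\ (forall b, lt2 b alpha -> exists g, lt2 b g /\ lt2 g alpha).

Definition club2 (C : set W2) : Prop :=
  (forall b, exists2 g, C g & (b = g \/ lt2 b g)) /\
  (forall alpha, (exists b, lt2 b alpha) ->
     (forall b, lt2 b alpha -> exists g, C g /\ lt2 b g /\ lt2 g alpha) -> C alpha).

Definition stationary2 (S : set W2) : Prop :=
  forall C, club2 C -> S `&` C !=set0.

Definition Pw1 (alpha : W2) : set (set W2) :=
  [set x | x `<=` seg lt2 alpha /\ countable x].

Definition clubP (alpha : W2) (c : set (set W2)) : Prop :=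
  c `<=` Pw1 alpha /\
  (forall x, Pw1 alpha x -> exists2 y, c y & x `<=` y) /\
  (forall f : nat -> set W2, (forall n, c (f n)) -> (forall n, f n `<=` f n.+1) ->
     c (\bigcup_n f n)).

Definition stationaryP (alpha : W2) (s : set (set W2)) : Prop :=
  s `<=` Pw1 alpha /\ forall c, clubP alpha c -> s `&` c !=set0.

Definition uncountable_ord (alpha : W2) : Prop := ~ countable (seg lt2 alpha).

Definition disjoint_stationary_sequence (S : set W2) (s : W2 -> set (set W2)) : Prop :=
  stationary2 S /\ (forall alpha, S alpha -> cof_omega1 alpha) /\
  (forall alpha, S alpha -> stationaryP alpha (s alpha)) /\
  (forall alpha beta, S alpha -> S beta -> lt2 alpha beta -> s alpha `&` s beta = set0).

Definition exists_DSS : Prop := exists S s, disjoint_stationary_sequence S s.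

Definition approachability : Prop :=
  exists (a : W2 -> set W2), (forall i, countable (a i)) /\
  exists C, club2 C /\
    forall alpha, C alpha -> is_limit alpha ->
      exists c, otp_is_cf c alpha /\
        forall b, lt2 b alpha ->
          exists i, lt2 i alpha /\ a i = c `&` seg lt2 b.
End Defs.

(* Main.v *)
Require Import Defs.
From mathcomp Require Import all_boot.
From mathcomp Require Import boolp classical_sets cardinality.
From Stdlib Require Import Classical.
Set Implicit Arguments. Unset Strict Implicit. Unset Printing Implicit Defensive.
Local Open Scope classical_set_scope.
Local Open Scope card_scope.

Lemma cardleP (T U : Type) (A : set T) (u0 : U) :
  A #<= [set: U] <-> exists f : T -> U, forall x y, A x -> A y -> f x = f y -> x = y.
Proof.
move: u0; elim/Ppointed: U => U u0.
  by case: (no u0).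
split.
  move=> /pcard_injP [f finj]; exists f => x y Ax Ay fxy.
  by apply: finj => //; rewrite inE.
move=> [f finj]; apply/pcard_injP; exists f => x y; rewrite !inE => Ax Ay; exact: finj.
Qed.

Lemma countableP' (T : Type) (A : set T) :
  countable A <-> exists f : T -> nat, forall x y, A x -> A y -> f x = f y -> x = y.
Proof. exact: (cardleP _ 0%N). Qed.

Lemma countableU (T : Type) (A B : set T) :
  countable A -> countable B -> countable (A `|` B).
Proof.
move=> cA cB.
apply: (@sub_countable _ _ _ (\bigcup_(i in [set: bool]) (if i then A else B))).
  apply: subset_card_le => x [Ax|Bx]; [exists true | exists false] => //.
by apply: bigcup_countable => // -[].
Qed.

Lemma countable_image (T U : Type) (f : T -> U) (A : set T) :
  countable A -> countable (f @` A).
Proof. move=> cA; exact: (sub_countable (card_image_le f A) cA). Qed.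

Section WO.
Variables (T : Type) (lt : T -> T -> Prop).
Hypothesis Hwo : strict_wellorder lt.

Lemma lt_irr x : ~ lt x x. Proof. by case: Hwo. Qed.
Lemma lt_trans x y z : lt x y -> lt y z -> lt x z.
Proof. by case: Hwo => _ [H _]; apply: H. Qed.
Lemma lt_tri x y : lt x y \/ x = y \/ lt y x.
Proof. by case: Hwo => _ [_ [H _]]; apply: H. Qed.
Lemma lt_wf : well_founded lt. Proof. by case: Hwo => _ [_ [_ H]]. Qed.

Lemma nlt x y : ~ lt x y -> y = x \/ lt y x.
Proof. by move=> H; case: (lt_tri x y) => [//|[->|]]; auto. Qed.

Lemma lt_asym x y : lt x y -> ~ lt y x.
Proof. by move=> h1 h2; apply: (lt_irr (lt_trans h1 h2)). Qed.

Lemma le_lt_trans x y z : (x = y \/ lt x y) -> lt y z -> lt x z.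
Proof. by case=> [->//|h1 h2]; apply: lt_trans h1 h2. Qed.

Lemma lt_le_trans x y z : lt x y -> (y = z \/ lt y z) -> lt x z.
Proof. by move=> h1 [<-//|h2]; apply: lt_trans h1 h2. Qed.

Lemma wf_least (P : T -> Prop) : (exists x, P x) ->
  exists x, P x /\ forall y, P y -> ~ lt y x.
Proof.
move=> [x Px]; apply: NNPP => Hno.
suff : forall z, ~ P z by move/(_ x).
move=> z; elim/(well_founded_ind lt_wf): z => z IH Pz.
apply: Hno; exists z; split => // y Py lyz; exact: (IH y lyz Py).
Qed.
End WO.
Section W1facts.
Variables (W1 : Type) (lt1 : W1 -> W1 -> Prop).
Hypothesis H1 : is_omega1 lt1.

Let wo1 : strict_wellorder lt1. Proof. by case: H1. Qed.
Let unc1 : ~ countable [set: W1]. Proof. by case: H1 => _ []. Qed.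
Let segc1 x : countable (seg lt1 x). Proof. by case: H1 => _ []. Qed.

Lemma w1_inhab : exists w : W1, True.
Proof.
apply: NNPP => H; apply: unc1.
have -> : [set: W1] = set0 by apply/seteqP; split => // x _; apply: H; exists x.
exact: countable0.
Qed.

Lemma bound1 (X : set W1) : countable X -> exists eta, forall z, X z -> lt1 z eta.
Proof.
move=> cX; apply: NNPP => Hno; apply: unc1.
apply: (@sub_countable _ _ _ (\bigcup_(z in X) (seg lt1 z `|` [set z]))).
  apply: subset_card_le => eta _.
  have [z [Xz nz]] : exists z, X z /\ ~ lt1 z eta.
    apply: NNPP => H; apply: Hno; exists eta => z Xz; apply: NNPP => nz.
    by apply: H; exists z.
  exists z => //; case: (nlt wo1 nz) => [->|h]; [right|left] => //.
by apply: bigcup_countable => // z _; apply: countableU.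
Qed.

Lemma nomax1 x : exists y, lt1 x y.
Proof. by have [y Hy] := bound1 (countable1 x); exists y; apply: Hy. Qed.

Definition succ1 (x : W1) : W1 :=
  proj1_sig (cid (wf_least wo1 (nomax1 x))).

Lemma succ1_gt x : lt1 x (succ1 x).
Proof. rewrite /succ1; case: cid => y [] //. Qed.

Lemma succ1_min x y : lt1 x y -> ~ lt1 y (succ1 x).
Proof. rewrite /succ1; case: cid => z [_ H] /=; exact: H. Qed.

Lemma succ1_inj x y : succ1 x = succ1 y -> x = y.
Proof.
move=> E; case: (lt_tri wo1 x y) => [h|[//|h]].
- have := succ1_min h; rewrite E => H; exfalso.
  case: (nlt wo1 H) => [e|h2].
  + by apply: (lt_irr wo1 (x:=y)); rewrite -{2}e; apply: succ1_gt.
  + by apply: (lt_asym wo1 h2); apply: succ1_gt.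
- have := succ1_min h; rewrite -E => H; exfalso.
  case: (nlt wo1 H) => [e|h2].
  + by apply: (lt_irr wo1 (x:=x)); rewrite -{2}e; apply: succ1_gt.
  + by apply: (lt_asym wo1 h2); apply: succ1_gt.
Qed.

Definition nonsucc (l : W1) := ~ exists y, succ1 y = l.

Lemma decomp x : exists l k, nonsucc l /\ x = iter k succ1 l.
Proof.
elim/(well_founded_ind (lt_wf wo1)): x => x IH.
case: (classic (nonsucc x)) => Hx; first by exists x, 0%N.
have [y Ey] : exists y, succ1 y = x by apply: NNPP.
have [l [k [Hl Ek]]] := IH y (eq_ind _ _ (succ1_gt y) _ Ey).
by exists l, k.+1; split => //; rewrite iterS -Ek Ey.
Qed.

Lemma decomp_uniq l m k k' : nonsucc l -> nonsucc m ->
  iter k succ1 l = iter k' succ1 m -> k = k' /\ l = m.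
Proof.
move=> Hl Hm; elim: k k' => [|k IH] [|k'] //=.
- by move=> E; exfalso; apply: Hl; exists (iter k' succ1 m).
- by move=> E; exfalso; apply: Hm; exists (iter k succ1 l).
- by move=> /succ1_inj /IH [-> ->].
Qed.

Lemma W1nat : exists g : W1 * nat -> W1, injective g.
Proof.
have H x : {p : W1 * nat | nonsucc p.1 /\ x = iter p.2 succ1 p.1}.
  apply: cid; have [l [k Hlk]] := decomp x; by exists (l, k).
pose g (p : W1 * nat) := iter (choice.pickle ((proj1_sig (H p.1)).2, p.2)) succ1
   (proj1_sig (H p.1)).1.
exists g => -[x n] [y m]; rewrite /g /=.
case: (H x) => -[l k] /= [Hl Ex]; case: (H y) => -[l' k'] /= [Hl' Ey].
move=> /(decomp_uniq Hl Hl') [/(pcan_inj choice.pickleK_inv) [E1 E2] E3].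
by rewrite Ex Ey E1 E3 E2.
Qed.

Lemma W1sq : exists g : W1 * W1 -> W1, injective g.
Proof.
have [gn gninj] := W1nat.
have He m : {e : W1 -> nat | forall x y, (x = m \/ lt1 x m) -> (y = m \/ lt1 y m) ->
   e x = e y -> x = y}.
  apply: cid; have /countableP' [e He] : countable (seg lt1 m `|` [set m]).
    by apply: countableU.
  exists e => x y hx hy; apply: He.
  - by case: hx => [->|h]; [right|left].
  - by case: hy => [->|h]; [right|left].
pose mx (p : W1 * W1) := if pselect (lt1 p.1 p.2) then p.2 else p.1.
have mx1 p : p.1 = mx p \/ lt1 p.1 (mx p).
  rewrite /mx; case: pselect => h; [by right|by left].
have mx2 p : p.2 = mx p \/ lt1 p.2 (mx p).
  rewrite /mx; case: pselect => h /=; first by left.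
  exact: (nlt wo1 h).
pose g (p : W1 * W1) := gn (mx p, choice.pickle (proj1_sig (He (mx p)) p.1,
                                                 proj1_sig (He (mx p)) p.2)).
exists g => p q; rewrite /g => /gninj [E /(pcan_inj choice.pickleK_inv) [E1 E2]].
move: E1 E2; rewrite -E; case: (He (mx p)) => e He' /= E1 E2.
have h1 := mx1 q; have h2 := mx2 q; rewrite -E in h1 h2.
by case: p q E h1 h2 E1 E2 {He'} (He' p.1 q.1) (He' p.2 q.2) (mx1 p) (mx2 p)
  => [a b] [c d] _ /= h1 h2 E1 E2 K1 K2 h3 h4; rewrite (K1 h3 h1 E1) (K2 h4 h2 E2).
Qed.

Lemma nat_W1 : exists g : nat -> W1, injective g.
Proof.
have [w _] := w1_inhab.
have : [set: nat] #<= [set: W1].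
  apply/infiniteP => fin; apply: unc1; exact: finite_set_countable.
move=> /(cardleP _ w) [g Hg]; exists g => x y; exact: Hg.
Qed.

Lemma leW1_add1 (T : Type) (A : set T) (p : T) :
  A #<= [set: W1] -> (A `|` [set p]) #<= [set: W1].
Proof.
have [w _] := w1_inhab; have [gn gninj] := W1nat.
move=> /(cardleP _ w) [f Hf]; apply/(cardleP _ w).
exists (fun x => if pselect (x = p) then gn (w, 0%N) else gn (f x, 1%N)).
move=> x y Hx Hy; case: pselect => ex; case: pselect => ey /=.
- by move=> _; rewrite ex ey.
- by move=> /gninj [].
- by move=> /gninj [].
move=> /gninj [E]; apply: (Hf x y) => //.
  by case: Hx => // /= h; exfalso; apply: ex.
by case: Hy => // /= h; exfalso; apply: ey.
Qed.

Lemma countable_leW1 (T : Type) (A : set T) : countable A -> A #<= [set: W1].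
Proof.
have [w _] := w1_inhab; have [g ginj] := nat_W1.
move=> /countableP' [f Hf]; apply/(cardleP _ w).
by exists (fun x => g (f x)) => x y Hx Hy /ginj; apply: Hf.
Qed.

End W1facts.

Section W2facts.
Variables (W1 : Type) (lt1 : W1 -> W1 -> Prop) (W2 : Type) (lt2 : W2 -> W2 -> Prop).
Hypothesis H1 : is_omega1 lt1.
Hypothesis H2 : is_omega2 W1 lt2.

Let wo1 : strict_wellorder lt1. Proof. by case: H1. Qed.
Let wo2 : strict_wellorder lt2. Proof. by case: H2. Qed.
Let big2 : ~ ([set: W2] #<= [set: W1]). Proof. by case: H2 => _ []. Qed.
Let segle2 x : seg lt2 x #<= [set: W1]. Proof. by case: H2 => _ []. Qed.

Lemma seg_inj2 (g : W2) : exists f : W2 -> W1,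
  forall x y, lt2 x g -> lt2 y g -> f x = f y -> x = y.
Proof.
have [w _] := w1_inhab H1.
by have /(cardleP _ w) := segle2 g.
Qed.

Definition j2 (g : W2) : W2 -> W1 := proj1_sig (cid (seg_inj2 g)).

Lemma j2_inj g x y : lt2 x g -> lt2 y g -> j2 g x = j2 g y -> x = y.
Proof. rewrite /j2; case: cid => f Hf /=; exact: Hf. Qed.

Lemma reg2 (X : set W2) : X #<= [set: W1] -> exists b, forall a, X a -> lt2 a b.
Proof.
have [w _] := w1_inhab H1; have [gn gninj] := W1nat H1; have [g2 g2inj] := W1sq H1.
move=> /(cardleP _ w) [fT HfT]; apply: NNPP => Hno; apply: big2.
have Ha b : {a | X a /\ (b = a \/ lt2 b a)}.
  apply: cid; apply: NNPP => H; apply: Hno; exists b => a Xa; apply: NNPP => nab.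
  by apply: H; exists a; split => //; apply: (nlt wo2).
pose t b := if pselect (b = proj1_sig (Ha b)) then gn (w, 0%N)
            else gn (j2 (proj1_sig (Ha b)) b, 1%N).
apply/(cardleP _ w); exists (fun b => g2 (fT (proj1_sig (Ha b)), t b)).
move=> b b' _ _ /g2inj [E]; rewrite /t.
case: (Ha b) E => a [Xa Ha'] /=; case: (Ha b') => a' [Xa' Ha''] /= E.
have {}E := HfT _ _ Xa Xa' E; subst a'.
case: pselect => e1; case: pselect => e2 /=.
- by rewrite e1 e2.
- by move=> /gninj [].
- by move=> /gninj [].
move=> /gninj [E]; apply: (j2_inj (g:=a)) => //.
  by case: Ha'.
by case: Ha''.
Qed.

Lemma nomax2 x : exists y, lt2 x y.
Proof.
have [y Hy] := reg2 (countable_leW1 H1 (countable1 x)).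
by exists y; apply: Hy.
Qed.

Lemma sup2 (u : nat -> W2) : (forall n, lt2 (u n) (u n.+1)) ->
  exists d, (forall n, lt2 (u n) d) /\ (forall g, lt2 g d -> exists n, lt2 g (u n)).
Proof.
move=> Hu.
have cu : countable (range u) by apply: countable_image.
have [b Hb] := reg2 (countable_leW1 H1 cu).
have [d [Hd Hmin]] := wf_least wo2 (P := fun d => forall n, lt2 (u n) d)
   (ex_intro _ b (fun n => Hb _ (ex_intro2 _ _ n I erefl))).
exists d; split => // g gd; apply: NNPP => Hn.
apply: (Hmin g) => // n; apply: NNPP => nl; apply: Hn; exists n.+1.
apply: (le_lt_trans wo2) (Hu n); exact: (nlt wo2 nl).
Qed.

Lemma club_sup (C : set W2) (u : nat -> W2) d : club2 lt2 C ->
  (forall n, lt2 (u n) d) -> (forall g, lt2 g d -> exists n, lt2 g (u n)) ->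
  (forall n, exists g m, C g /\ lt2 (u n) g /\ lt2 g (u m)) -> C d.
Proof.
move=> [_ Cl] Hd Hg HC; apply: Cl; first by exists (u 0%N).
move=> b bd; have [n bn] := Hg b bd; have [g [m [Cg [h1 h2]]]] := HC n.
exists g; split => //; split; first exact: (lt_trans wo2 bn h1).
exact: (lt_trans wo2 h2).
Qed.

Lemma clubI (C D : set W2) : club2 lt2 C -> club2 lt2 D -> club2 lt2 (C `&` D).
Proof.
move=> HC HD.
have Hst x : exists y, (exists c, C c /\ lt2 x c /\ lt2 c y) /\ D y /\ lt2 x y.
  have [x1 h1] := nomax2 x; have [c Cc hc] := HC.1 x1.
  have xc : lt2 x c := lt_le_trans wo2 h1 hc.
  have [c1 h2] := nomax2 c; have [y Dy hy] := HD.1 c1.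
  have cy : lt2 c y := lt_le_trans wo2 h2 hy.
  exists y; split; [by exists c | split => //]; exact: (lt_trans wo2 xc cy).
pose st x := proj1_sig (cid (Hst x)).
have stP x : (exists c, C c /\ lt2 x c /\ lt2 c (st x)) /\ D (st x) /\ lt2 x (st x).
  by rewrite /st; case: cid.
split.
  move=> b; pose u n := iter n st b.
  have Hu n : lt2 (u n) (u n.+1) by rewrite /u iterS; case: (stP (iter n st b)) => _ [].
  have [d [Hd Hg]] := sup2 Hu.
  exists d; last by right; exact: (Hd 0%N).
  split.
  - apply: (club_sup HC Hd Hg) => n.
    have [[c [Cc [h1 h2]]] _] := stP (u n).
    by exists c, n.+1; rewrite /u iterS.
  - apply: (club_sup HD Hd Hg) => n.
    exists (u n.+1), n.+2; split; first by rewrite /u iterS; case: (stP (u n)) => _ [].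
    by split; apply: Hu.
move=> a ex Hb; split.
  apply: HC.2 => // b ba; have [g [[Cg _] h]] := Hb b ba; by exists g.
apply: HD.2 => // b ba; have [g [[_ Dg] h]] := Hb b ba; by exists g.
Qed.

Lemma club_closure (T : W2 -> set W2) :
  (forall g, exists h, forall a, T g a -> lt2 a h) ->
  club2 lt2 [set d | forall g a, lt2 g d -> T g a -> lt2 a d].
Proof.
move=> HT.
pose H g := proj1_sig (cid (HT g)).
have HP g a : T g a -> lt2 a (H g) by rewrite /H; case: cid => h /=; apply.
have Hst x : exists y, lt2 x y /\ forall g, lt2 g x -> lt2 (H g) y.
  have : (H @` seg lt2 x `|` [set x]) #<= [set: W1].
    apply: (leW1_add1 H1).
    exact: (card_le_trans (card_image_le H (seg lt2 x)) (segle2 x)).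
  move=> /reg2 [y Hy]; exists y; split; first by apply: Hy; right.
  by move=> g gx; apply: Hy; left; exists g.
pose st x := proj1_sig (cid (Hst x)).
have stP x : lt2 x (st x) /\ forall g, lt2 g x -> lt2 (H g) (st x).
  by rewrite /st; case: cid.
split.
  move=> b; pose u n := iter n st b.
  have Hu n : lt2 (u n) (u n.+1) by rewrite /u iterS; case: (stP (iter n st b)).
  have [d [Hd Hg]] := sup2 Hu.
  exists d; last by right; exact: (Hd 0%N).
  move=> g a gd Tga; have [n gn] := Hg g gd.
  apply: (lt_trans wo2 (HP _ _ Tga)); apply: (lt_trans wo2 _ (Hd n.+1)).
  by rewrite /u iterS; apply: (stP (u n)).2.
move=> a _ Hb g a' ga Ta'; have [d [Dd [h1 h2]]] := Hb g ga.
exact: (lt_trans wo2 (Dd g a' h1 Ta') h2).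
Qed.

End W2facts.

Section Main.
Variables (W1 : Type) (lt1 : W1 -> W1 -> Prop) (W2 : Type) (lt2 : W2 -> W2 -> Prop).
Hypothesis H1 : is_omega1 lt1.
Hypothesis H2 : is_omega2 W1 lt2.

Let wo1 : strict_wellorder lt1. Proof. by case: H1. Qed.
Let wo2 : strict_wellorder lt2. Proof. by case: H2. Qed.
Let segc1 x : countable (seg lt1 x). Proof. by case: H1 => _ []. Qed.

Definition Xs (A : set W2) (eta : W1) : set W2 :=
  [set y | exists g, A g /\ lt2 y g /\ lt1 (j2 H1 H2 g y) eta].

Lemma Xs_mono A A' eta eta' : A `<=` A' -> (eta = eta' \/ lt1 eta eta') ->
  Xs A eta `<=` Xs A' eta'.
Proof.
move=> AA' ee y [g [Ag [yg jg]]]; exists g; split; first exact: AA'.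
by split => //; apply: (lt_le_trans wo1 jg).
Qed.

Lemma Xs_countable A eta : countable A -> countable (Xs A eta).
Proof.
move=> cA.
apply: (@sub_countable _ _ _
  (\bigcup_(g in A) [set y | lt2 y g /\ lt1 (j2 H1 H2 g y) eta])).
  by apply: subset_card_le => y [g [Ag h]]; exists g.
apply: bigcup_countable => // g Ag.
have /countableP' [e He] := segc1 eta.
apply/countableP'; exists (fun y => e (j2 H1 H2 g y)) => y y' [yg jy] [y'g jy'] E.
exact: (j2_inj yg y'g (He _ _ jy jy' E)).
Qed.

Lemma cof_limit alpha : cof_omega1 lt1 lt2 alpha -> is_limit lt2 alpha.
Proof.
move=> [f [finc [fsub fcof]]]; have [w _] := w1_inhab H1.
split; first by exists (f w); apply: fsub; exists w.
move=> b ba; have [h [z _ <-] bh] := fcof b ba.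
have [z' zz'] := nomax1 H1 z.
exists (f z'); split; first exact: (le_lt_trans wo2 bh (finc _ _ zz')).
by apply: fsub; exists z'.
Qed.

Definition Ys (a : W2 -> set W2) i eta := Xs (a i) eta.

Lemma partC (S : set W2) (s : W2 -> set (set W2)) (a : W2 -> set W2) (C : set W2) :
  (forall alpha, S alpha -> cof_omega1 lt1 lt2 alpha) ->
  (forall alpha, S alpha -> stationaryP lt2 alpha (s alpha)) ->
  (forall i, countable (a i)) ->
  (forall alpha, C alpha -> is_limit lt2 alpha ->
      exists c, otp_is_cf lt2 c alpha /\
        forall b, lt2 b alpha ->
          exists i, lt2 i alpha /\ a i = c `&` seg lt2 b) ->
  forall alpha, S alpha -> C alpha -> exists i eta, lt2 i alpha /\ s alpha (Ys a i eta).
Proof.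
move=> Scof Sstat acnt Hap alpha Sa Ca.
have lim := cof_limit (Scof alpha Sa).
have [f [finc [fsub fcof]]] := Scof alpha Sa.
have [c [[[csub ccof] _] capp]] := Hap alpha Ca lim.
have [w0 _] := w1_inhab H1.
have HB eta : exists b, (forall g, lt2 g b <-> exists z, lt1 z eta /\ lt2 g (f z))
                        /\ lt2 b alpha.
  have exb : exists b, forall z, lt1 z eta -> f z = b \/ lt2 (f z) b.
    by exists (f eta) => z zl; right; apply: finc.
  have [b [Pb minb]] := wf_least wo2 exb.
  exists b; split.
    move=> g; split.
      move=> gb; apply: NNPP => Hn; apply: (minb g _ gb) => z zl.
      apply: (nlt wo2) => gf; apply: Hn; by exists z.
    by move=> [z [zl gf]]; apply: (lt_le_trans wo2 gf (Pb z zl)).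
  have fa : lt2 (f eta) alpha by apply: fsub; exists eta.
  case: (lt_tri wo2 b (f eta)) => [h|[->//|h]].
    exact: (lt_trans wo2 h fa).
  by exfalso; apply: (minb (f eta)) h => z zl; right; apply: finc.
pose B eta := proj1_sig (cid (HB eta)).
have BP eta : (forall g, lt2 g (B eta) <-> exists z, lt1 z eta /\ lt2 g (f z))
                        /\ lt2 (B eta) alpha by rewrite /B; case: cid.
pose E := [set x | exists eta, x = Xs (c `&` seg lt2 (B eta)) eta].
have Bmono e e' : (e = e' \/ lt1 e e') -> c `&` seg lt2 (B e) `<=` c `&` seg lt2 (B e').
  move=> ee g [cg gB]; split => //; rewrite /seg /=.
  have [z [ze gz]] := proj1 ((BP e).1 g) gB.
  by apply/(BP e').1; exists z; split => //; apply: (lt_le_trans wo1 ze).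
have Ecl : clubP lt2 alpha E.
  split; [|split].
  - move=> x [eta ->]; split.
      move=> y [g [[cg _] [yg _]]]; exact: (lt_trans wo2 yg (csub g cg)).
    apply: Xs_countable; have [i [_ <-]] := capp (B eta) (BP eta).2; exact: acnt.
  - move=> x [xsub xcnt].
    have Hy y : exists p : W2 * W1, lt2 y alpha -> c p.1 /\ lt2 y p.1 /\ lt2 p.1 (f p.2).
      case: (classic (lt2 y alpha)) => ya; last by exists (y, w0).
      have [g [yg ga]] := lim.2 y ya.
      have [g' cg' gg'] := ccof g ga.
      have g'a : lt2 g' alpha := csub g' cg'.
      have [h [z _ <-] g'h] := fcof g' g'a.
      have [z' zz'] := nomax1 H1 z.
      exists (g', z') => _ /=; split => //; split; first exact: (lt_le_trans wo2 yg gg').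
      exact: (le_lt_trans wo2 g'h (finc _ _ zz')).
    pose P y := proj1_sig (cid (Hy y)).
    have PP y : lt2 y alpha -> c (P y).1 /\ lt2 y (P y).1 /\ lt2 (P y).1 (f (P y).2).
      by rewrite /P; case: cid.
    have cZ : countable ((fun y => (P y).2) @` x `|` (fun y => j2 H1 H2 (P y).1 y) @` x).
      by apply: countableU; apply: countable_image.
    have [eta Heta] := bound1 H1 cZ.
    exists (Xs (c `&` seg lt2 (B eta)) eta); first by exists eta.
    move=> y xy; have [h1 [h2 h3]] := PP y (xsub y xy).
    exists (P y).1; split; last split => //.
      split => //; rewrite /seg /=; apply/(BP eta).1; exists (P y).2; split => //.
      by apply: Heta; left; exists y.
    by apply: Heta; right; exists y.
  - move=> F HF _.
    have He n : {e | F n = Xs (c `&` seg lt2 (B e)) e} by apply: cid; apply: HF.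
    pose e n := proj1_sig (He n).
    have Fe n : F n = Xs (c `&` seg lt2 (B (e n))) (e n) by rewrite /e; case: (He n).
    case: (classic (exists k, forall n, ~ lt1 (e k) (e n))) => [[k Hk]|Hno].
      have -> : \bigcup_n F n = F k.
        apply/seteqP; split; last by move=> y Fy; exists k.
        move=> y [n _]; rewrite (Fe n) (Fe k); apply: Xs_mono.
          by apply: Bmono; apply: (nlt wo1); apply: Hk.
        by apply: (nlt wo1); apply: Hk.
      by exists (e k); apply: Fe.
    have Hn k : exists n, lt1 (e k) (e n).
      by apply: NNPP => H; apply: Hno; exists k => n h; apply: H; exists n.
    have cr : countable (range e) by apply: countable_image.
    have [b Hb] := bound1 H1 cr.
    have [es [Pes mines]] := wf_least wo1 (P := fun z => forall n, lt1 (e n) z)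
        (ex_intro _ b (fun n => Hb _ (ex_intro2 _ _ n I erefl))).
    have Hsup z : lt1 z es -> exists n, lt1 z (e n).
      move=> zes; apply: NNPP => Hz; apply: (mines z) => // n.
      apply: NNPP => nez; have [m hm] := Hn n; apply: Hz; exists m.
      exact: (le_lt_trans wo1 (nlt wo1 nez) hm).
    exists es; apply/seteqP; split.
      move=> y [n _]; rewrite (Fe n); apply: Xs_mono; last by right.
      by apply: Bmono; right.
    move=> y [g [[cg gB] [yg jg]]].
    have [z [zes gz]] := proj1 ((BP es).1 g) gB.
    have [n1 h1] := Hsup z zes; have [n2 h2] := Hsup _ jg.
    have Hk : exists k, (e n1 = e k \/ lt1 (e n1) (e k)) /\ (e n2 = e k \/ lt1 (e n2) (e k)).
      case: (lt_tri wo1 (e n1) (e n2)) => [h|[h|h]].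
      + by exists n2; split; [right|left].
      + by exists n2; split; [left|left].
      + by exists n1; split; [left|right].
    have [k [k1 k2]] := Hk.
    exists k => //; rewrite (Fe k); exists g; split.
      split => //; rewrite /seg /=; apply/(BP (e k)).1; exists z; split => //.
      exact: (lt_le_trans wo1 h1 k1).
    by split => //; exact: (lt_le_trans wo1 h2 k2).
have [_ Hs] := Sstat alpha Sa.
have [x [sx [eta Ex]]] := Hs E Ecl.
have [i [ia ai]] := capp (B eta) (BP eta).2.
by exists i, eta; split => //; rewrite /Ys ai -Ex.
Qed.

End Main.

Theorem corollary1p6 (W1 : Type) (lt1 : W1 -> W1 -> Prop)
  (W2 : Type) (lt2 : W2 -> W2 -> Prop) :
  is_omega1 lt1 -> is_omega2 W1 lt2 ->
  exists_DSS lt1 lt2 -> ~ approachability lt2.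
Proof.
move=> H1 H2 [S [s [Sst [Scof [Sstat Sdisj]]]]] [a [acnt [C [Cclub Hap]]]].
have wo2 : strict_wellorder lt2 by case: H2.
have [w _] := w1_inhab H1; have [g2 g2inj] := W1sq H1.
pose T g := [set al | S al /\ exists i eta, lt2 i g /\ s al (Ys H1 H2 a i eta)].
have HT g : exists h, forall al, T g al -> lt2 al h.
  apply: (reg2 H1 H2).
  have Hp al : exists p : W2 * W1, T g al -> lt2 p.1 g /\ s al (Ys H1 H2 a p.1 p.2).
    case: (classic (T g al)) => [[_ [i [eta h]]]|nT]; first by exists (i, eta).
    by exists (g, w).
  pose p al := proj1_sig (cid (Hp al)).
  have pP al : T g al -> lt2 (p al).1 g /\ s al (Ys H1 H2 a (p al).1 (p al).2).
    by rewrite /p; case: cid.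
  apply/(cardleP _ w); exists (fun al => g2 (j2 H1 H2 g (p al).1, (p al).2)).
  move=> al al' Ta Ta' /g2inj [E1 E2].
  have [i1 s1] := pP al Ta; have [i2 s2] := pP al' Ta'.
  have Ei := j2_inj i1 i2 E1.
  rewrite Ei E2 in s1.
  case: (lt_tri wo2 al al') => [h|[//|h]].
    have := Sdisj _ _ Ta.1 Ta'.1 h => E.
    have : (s al `&` s al') (Ys H1 H2 a (p al').1 (p al').2) by split.
    by rewrite E.
  have := Sdisj _ _ Ta'.1 Ta.1 h => E.
  have : (s al' `&` s al) (Ys H1 H2 a (p al').1 (p al').2) by split.
  by rewrite E.
have Dcl := club_closure H1 H2 HT.
have [al [Sal [Cal Dal]]] := Sst _ (clubI H1 H2 Cclub Dcl).
have [i [eta [ial sal]]] := partC H1 H2 Scof (fun al Sa => (Sstat al Sa)) acnt Hap Sal Cal.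
have [_ lim] := cof_limit H1 H2 (Scof al Sal).
have [g [ig gal]] := lim i ial.
have := Dal g al gal (conj Sal (ex_intro _ i (ex_intro _ eta (conj ig sal)))).
exact: (lt_irr wo2).
Qed.
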